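(* Let $G$ be a finite subset of $\mathbb{N}^2$ that has at least one connected h-bridge. If $G$ contains a connected component $C$ (of the full grid graph of $G$) such that $C\cap(\mathbb{N}\times\{t_G\})\neq\emptyset$ and $C\cap(\{l_G\}\times\mathbb{N})=\emptyset$, then there exists a point $\vec x_N\in G\setminus C$ such that $N(\vec x_N)\notin G$ and $\vec x_N\notin\mathbb{N}\times\{t_G\}$.
   Context: The full grid graph of $V\subseteq\mathbb{Z}^2$ has vertex set $V$ and an edge between $\vec x,\vec y$ iff $\|\vec x-\vec y\|=1$; paths and connected components are taken in this graph. For a finite $S\subseteq\mathbb{Z}^2$ let $l_S=\min_{(x,y)\in S}x$, $r_S=\max_{(x,y)\in S}x$, $b_S=\min_{(x,y)\in S}y$, $t_S=\max_{(x,y)\in S}y$. An h-bridge of $S$ is a subset of $S$ of the form $\{(l_S,y),(r_S,y)\}$; a v-bridge is a subset of $S$ of the form $\{(x,b_S),(x,t_S)\}$. A bridge is connected if there is a simple path in (the full grid graph of) $S$ connecting its two points. Directions: $N(x,y)=(x,y+1)$, $E(x,y)=(x+1,y)$, $S(x,y)=(x,y-1)$, $W(x,y)=(x-1,y)$. *)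

(* Defs.v *)
(* Points of N^2 are pairs (x, y) : nat * nat.
   A finite subset of N^2 is represented by a sequence G : seq (nat * nat)
   (membership x \in G; duplicates are irrelevant). *)
From mathcomp Require Import all_boot.
Set Implicit Arguments. Unset Strict Implicit. Unset Printing Implicit Defensive.

Definition point := (nat * nat)%type.

Definition dirN (p : point) : point := (p.1, p.2.+1).
Definition dirE (p : point) : point := (p.1.+1, p.2).

Definition gadj (u v : point) : bool :=
  ((u.1 == v.1) && ((u.2.+1 == v.2) || (v.2.+1 == u.2))) ||
  ((u.2 == v.2) && ((u.1.+1 == v.1) || (v.1.+1 == u.1))).

(* extremal coordinates (meaningful for nonempty S) *)
Definition lS (S : seq point) : nat :=
  foldr minn (head 0 (map fst S)) (map fst S).
Definition rS (S : seq point) : nat := foldr maxn 0 (map fst S).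
Definition bS (S : seq point) : nat :=
  foldr minn (head 0 (map snd S)) (map snd S).
Definition tS (S : seq point) : nat := foldr maxn 0 (map snd S).

Definition simple_path_in (S : seq point) (a b : point) (p : seq point) : bool :=
  [&& path gadj a p, last a p == b, uniq (a :: p) & all (fun z => z \in S) (a :: p)].

Definition connected_in (S : seq point) (a b : point) : Prop :=
  exists p, simple_path_in S a b p.

Definition is_hbridge (S : seq point) (y : nat) : Prop :=
  (lS S, y) \in S /\ (rS S, y) \in S.

Definition has_connected_hbridge (S : seq point) : Prop :=
  exists y, is_hbridge S y /\ connected_in S (lS S, y) (rS S, y).

Definition is_component (S : seq point) (C : pred point) : Prop :=
  exists x0, x0 \in S /\ forall y, C y <-> connected_in S x0 y.

(* Main.v *)
Require Import Defs.
From mathcomp Require Import all_boot.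
From mathcomp Require Import zify.
Set Implicit Arguments. Unset Strict Implicit.

Definition walk (S : seq point) (a b : point) : Prop :=
  exists p, [&& path gadj a p, last a p == b & all (fun z => z \in S) (a :: p)].

Lemma gadj_sym u v : gadj u v = gadj v u.
Proof.
by rewrite /gadj (eq_sym u.1) (eq_sym u.2) (orbC (u.2.+1 == v.2)) (orbC (u.1.+1 == v.1)).
Qed.

Lemma walk_cat S a b c : walk S a b -> walk S b c -> walk S a c.
Proof.
case=> p /and3P[P1 /eqP L1 A1] [q /and3P[P2 /eqP L2 A2]].
exists (p ++ q); rewrite cat_path last_cat L1 P1 P2 L2 eqxx /=.
rewrite /= all_cat; by move: A1 A2 => /= /andP[-> ->] /andP[_ ->].
Qed.

Lemma walk_step S a b : a \in S -> b \in S -> gadj a b -> walk S a b.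
Proof. move=> Ha Hb Hab; exists [:: b]; by rewrite /= Hab Ha Hb eqxx. Qed.

Lemma walk_refl S a : a \in S -> walk S a a.
Proof. move=> Ha; exists [::]; by rewrite /= Ha eqxx. Qed.

Lemma walk_in0 S a b : walk S a b -> a \in S.
Proof. by case=> p /and3P[_ _ /= /andP[]]. Qed.

Lemma walk_in S a b : walk S a b -> b \in S.
Proof.
case=> p /and3P[_ /eqP <- /allP A]; apply: A; exact: mem_last.
Qed.

Lemma walk_connected S a b : walk S a b -> connected_in S a b.
Proof.
case=> p /and3P[P /eqP L /allP A].
rewrite /connected_in -L.
case: (shortenP P) => p' P' U Sub.
exists p'; apply/and4P; split => //.
apply/allP => z; rewrite in_cons => /orP[/eqP->|/Sub H]; apply: A; rewrite in_cons ?eqxx //.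
by rewrite H orbT.
Qed.

Lemma comp_closed G (C : pred point) u v :
  is_component G C -> C u -> walk G u v -> C v.
Proof.
case=> x0 [_ H] /H [p sp] W; apply/H; apply: walk_connected.
apply: walk_cat W; exists p; move: sp => /and4P[? ? _ ?]; by apply/and3P.
Qed.

Lemma ivt S k a s : path gadj a s -> all (fun z => z \in S) (a :: s) ->
  a.1 <= k <= (last a s).1 -> exists z, z.1 = k /\ walk S z a.
Proof.
elim: s a => [|b s IH] a /=.
  move=> _ /andP[Ha _] /andP[H1 H2]; exists a; split; first by apply/eqP; rewrite eqn_leq H1 H2.
  exact: walk_refl.
move=> /andP[Hab Hp] /and3P[Ha Hb Hs] /andP[H1 H2].
case: (eqVneq a.1 k) => [E|NE]; first by exists a; split => //; exact: walk_refl.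
have Hbk : b.1 <= k.
  move: Hab; rewrite /gadj => /orP[/andP[/eqP E _]|/andP[_ /orP[/eqP E|/eqP E]]];
  move: NE H1 => /eqP NE H1; lia.
have [z [Hz W]] := IH b Hp (introT andP (conj Hb Hs)) (introT andP (conj Hbk H2)).
exists z; split => //; apply: walk_cat W _; apply: walk_step => //.
by rewrite gadj_sym.
Qed.

Lemma column S x j n : (forall i, i <= n -> (x, j + i) \in S) -> walk S (x, j + n) (x, j).
Proof.
elim: n => [|n IH] H; first by rewrite addn0; apply: walk_refl; rewrite -[j]addn0; exact: H.
apply: walk_cat (IH (fun i Hi => H i (leqW Hi))).
apply: walk_step; [exact: H|exact: H (leqW (leqnn n))|].
by rewrite /gadj /= eqxx addnS eqxx orbT.
Qed.

Lemma max_bound (f : point -> nat) s z : z \in s -> f z <= foldr maxn 0 (map f s).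
Proof.
elim: s => //= a s IH; rewrite in_cons => /orP[/eqP->|/IH H];
  [exact: leq_maxl | exact: leq_trans H (leq_maxr _ _)].
Qed.

Lemma min_bound (f : point -> nat) s d z : z \in s -> foldr minn d (map f s) <= f z.
Proof.
elim: s => //= a s IH; rewrite in_cons => /orP[/eqP->|/IH H];
  [exact: geq_minl | exact: leq_trans (geq_minr _ _) H].
Qed.

Theorem mainTheorem3 (G : seq point) (C : pred point) :
  has_connected_hbridge G ->
  is_component G C ->
  (exists x, C x /\ x.2 = tS G) ->
  (forall x, C x -> x.1 <> lS G) ->
  exists xN : point,
    [/\ xN \in G, ~~ C xN, dirN xN \notin G & xN.2 <> tS G].
Proof.
move=> [y [[Hl Hr] [P /and4P[Pp /eqP PL _ PA]]]] Hcomp [c [Cc Ct]] HCl.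
have cG : c \in G.
  case: (Hcomp) => x0 [_ H]; have [q sq] := (proj1 (H c)) Cc.
  apply: (@walk_in G x0); exists q; move: sq => /and4P[? ? _ ?]; by apply/and3P.
have Hk : (lS G, y).1 <= c.1 <= (last (lS G, y) P).1.
  rewrite PL /= /lS /rS; apply/andP; split.
    exact: (min_bound fst).
  exact: (max_bound fst).
have [p [Pp1 Wp]] := @ivt G c.1 _ _ Pp PA Hk.
have pG := walk_in0 Wp.
have nCp : ~ C p.
  move=> Cp; have := comp_closed Hcomp Cp Wp => Cl; exact: (HCl _ Cl).
move: c Cc Ct cG Hk Pp1 => [c1 c2] /= Cc Ct cG _ Pp1.
move: p pG Wp nCp Pp1 => [p1 j0] /= pG Wp nCp Pp1; subst p1.
have j0t : j0 <= tS G by exact: (max_bound snd pG).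
have exP : exists m, (fun m => (c1, j0 + m.+1) \notin G) m.
  exists (tS G - j0); apply/negP => Hin.
  have := max_bound snd Hin; rewrite /= -/(tS G); lia.
case: (ex_minnP exP) => m Hm Hmin.
have Hcol : forall i, i <= m -> (c1, j0 + i) \in G.
  case => [|i] Hi; first by rewrite addn0.
  case: (boolP ((c1, j0 + i.+1) \in G)) => // Hn.
  have := Hmin _ Hn; lia.
have Wx := column Hcol.
have nCx : ~ C (c1, j0 + m) by move=> Cx; exact: nCp (comp_closed Hcomp Cx Wx).
exists (c1, j0 + m); split.
- exact: Hcol.
- by apply/negP.
- by rewrite /dirN /= -addnS.
- move=> /= E; apply: nCx; by rewrite E -Ct.
Qed.
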